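(* Let $i\ge 5$ be an odd integer and let \[B(i)=\begin{cases}\{\tfrac{i+1}{2}+1,\tfrac{i+1}{2}+3,\dots,i\}, & \text{if } (i+1)/2 \text{ is even},\\ \{\tfrac{i+1}{2},\tfrac{i+1}{2}+2,\dots,i\}, & \text{if } (i+1)/2 \text{ is odd}.\end{cases}\] Then $S(i)=\bigcap_{j\in B(i)}T(j)$, and this intersection is a factorization of $S(i)$ into irreducible numerical semigroups (i.e. it cannot be refined).
   Context: $\mathbb{N}$ denotes the non-negative integers. A numerical semigroup is a submonoid of $(\mathbb{N},+)$ with finite complement. A numerical semigroup is irreducible if it cannot be written as the intersection of two numerical semigroups properly containing it. For an odd integer $j\ge 3$, $T(j)=\{0,\tfrac{j+1}{2},\tfrac{j+1}{2}+1,\dots,j-1\}\cup\{n\in\mathbb{Z}:n\ge j+1\}$; each $T(j)$ is an irreducible numerical semigroup. For odd $i\ge5$, $S(i)=\langle 2,i\rangle\cap T(i)$, where $\langle 2,i\rangle=\{2x+iy:x,y\in\mathbb{N}\}$. Given a numerical semigroup $S$ and irreducible numerical semigroups $S_1,\dots,S_n$, the expression $S_1\cap\dots\cap S_n$ is a factorization of $S$ (of length $n$) if $S=S_1\cap\dots\cap S_n$ and $S\neq\bigcap_{j\in J}S_j$ for every nonempty proper subset $J\subsetneq\{1,\dots,n\}$. *)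

(* Defs.v *)
From mathcomp Require Import all_boot.
Set Implicit Arguments. Unset Strict Implicit. Unset Printing Implicit Defensive.

Definition numerical_semigroup (S : nat -> Prop) : Prop :=
  [/\ S 0,
      (forall x y, S x -> S y -> S (x + y)) &
      exists N, forall n, N <= n -> S n].

Definition proper_superset (S S1 : nat -> Prop) : Prop :=
  (forall n, S n -> S1 n) /\ exists n, S1 n /\ ~ S n.

Definition irreducible (S : nat -> Prop) : Prop :=
  numerical_semigroup S /\
  ~ (exists S1 S2 : nat -> Prop,
       [/\ numerical_semigroup S1, numerical_semigroup S2,
           proper_superset S S1, proper_superset S S2 &
           forall n, S n <-> (S1 n /\ S2 n)]).

Definition T (j : nat) : nat -> Prop :=
  fun n => n = 0 \/ ((j + 1) %/ 2 <= n /\ n <= j - 1) \/ j + 1 <= n.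

Definition gen2 (i : nat) : nat -> Prop :=
  fun n => exists x y, n = 2 * x + i * y.

Definition S (i : nat) : nat -> Prop := fun n => gen2 i n /\ T i n.

Definition Bstart (i : nat) : nat :=
  let h := (i + 1) %/ 2 in if odd h then h else h + 1.

Definition B (i : nat) : seq nat :=
  [seq Bstart i + 2 * k | k <- iota 0 ((i - Bstart i) %/ 2 + 1)].

Definition factorization (S : nat -> Prop) (n : nat) (F : 'I_n -> nat -> Prop)
  : Prop :=
  [/\ 0 < n,
      (forall k, irreducible (F k)),
      (forall x, S x <-> forall k, F k x) &
      forall J : {set 'I_n}, J != set0 -> J != setT ->
        ~ (forall x, S x <-> forall k, k \in J -> F k x)].
Arguments factorization S n F : clear implicits.

(* Main.v *)
Require Import Defs.
From mathcomp Require Import all_boot.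
From mathcomp Require Import zify.

Lemma Tod d x : T (2*d+1) x <-> x = 0 \/ (d+1 <= x <= 2*d) \/ 2*d+2 <= x.
Proof.
rewrite /T; have -> : (2*d+1+1)%/2 = d+1 by lia.
have -> : 2*d+1-1 = 2*d by lia.
split.
  case=> [->|[[h1 h2]|h]]; [by left|right;left;lia|right;right;lia].
case=> [->|[/andP[h1 h2]|h]]; [by left|right;left;lia|right;right;lia].
Qed.

Lemma T_irr d : irreducible (T (2*d+1)).
Proof.
split.
  split; first by rewrite /T; left.
    move=> x y /Tod hx /Tod hy; apply/Tod; lia.
  by exists (2*d+2) => n hn; apply/Tod; lia.
case=> S1 [S2 [N1 N2 [s1 [n1 [h1 n1n]]] [s2 [n2 [h2 n2n]]] E]].
have key : forall S' n, (forall x, T (2*d+1) x -> S' x) ->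
   (forall x y, S' x -> S' y -> S' (x+y)) -> S' n -> ~ T (2*d+1) n -> S' (2*d+1).
  move=> S' n sub add Sn nT.
  have [e|ne] := eqVneq n (2*d+1); first by rewrite -e.
  have Hn : 1 <= n <= d.
    move: nT; rewrite Tod => nT. move/eqP: ne => ne. lia.
  have -> : 2*d+1 = n + (2*d+1-n) by lia.
  apply: add => //; apply: sub; apply/Tod; lia.
have A1 : S1 (2*d+1).
  apply: (key S1 n1) s1 _ h1 n1n.
  by move: N1 => -[_ s _].
have A2 : S2 (2*d+1).
  apply: (key S2 n2) s2 _ h2 n2n.
  by move: N2 => -[_ s _].
have : T (2*d+1) (2*d+1) by apply/E.
move/Tod; lia.
Qed.

Lemma Sch m x : S (2*m+1) x <->
  x = 0 \/ (exists e, x = 2*e /\ m+1 <= x) \/ 2*m+2 <= x.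
Proof.
rewrite /S /gen2 Tod; split.
  case=> [[a [y ->]] hT].
  case: y hT => [|y] hT.
    case: hT => [h|[h|h]]; first (left; lia).
      right; left; exists a; lia.
    right; left; exists a; lia.
  case: hT => [h|[h|h]]; [lia|lia|right; right; lia].
case=> [->|[[e [-> he]]|h]].
- split; [exists 0, 0; lia | lia].
- split; [exists e, 0; lia | lia].
- split; last lia.
  have [e [He|He]] : exists e, x = 2*e \/ x = 2*e+1 by exists (x%/2); lia.
  + exists e, 0; lia.
  + exists (e - m), 1; lia.
Qed.

Lemma main m c x : m <= 2*c <= m+1 ->
  S (2*m+1) x <-> forall d, c <= d <= m -> T (2*d+1) x.
Proof.
move=> hc; rewrite Sch; split.
  move=> H d hd; apply/Tod; case: H => [->|[[e [-> he]]|h]]; lia.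
move=> H; have := H m; rewrite Tod => /(_ ltac:(lia)).
case=> [->|[h|h]]; [by left| |by right;right].
have [e [He|He]] : exists e, x = 2*e \/ x = 2*e+1 by exists (x%/2); lia.
  by right; left; exists e; lia.
have := H e; rewrite Tod => /(_ ltac:(lia)); lia.
Qed.

Theorem lemma2p2 (i : nat) :
  odd i -> 5 <= i ->
  (forall x, S i x <-> forall j, j \in B i -> T j x) /\
  factorization (S i) (size (B i)) (fun k => T (nth 0 (B i) k)).
Proof.
move=> oi i5.
have [m Hm] : exists m, i = 2*m+1.
  exists i./2; have := odd_double_half i; rewrite oi -muln2; lia.
subst i.
set c := (m+1)./2.
have hc0 : odd (m+1) + c.*2 = m+1 by rewrite odd_double_half.
have hc : m <= 2*c <= m+1 by move: hc0; case: (odd (m+1)) => /=; rewrite -muln2; lia.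
have Hb : Bstart (2*m+1) = 2*c+1.
  rewrite /Bstart; have -> : (2*m+1+1)%/2 = m+1 by lia.
  move: hc0; case: (odd (m+1)) => /=; rewrite -muln2; lia.
have HB : B (2*m+1) = [seq 2*(c+k)+1 | k <- iota 0 (m-c+1)].
  rewrite /B Hb; have -> : (2*m+1-(2*c+1))%/2 + 1 = m-c+1 by lia.
  by apply: eq_map => k; lia.
have Hsz : size (B (2*m+1)) = m-c+1 by rewrite HB size_map size_iota.
have Hnth : forall k, k < m-c+1 -> nth 0 (B (2*m+1)) k = 2*(c+k)+1.
  move=> k hk; rewrite HB (nth_map 0) ?size_iota // nth_iota //.
have memB : forall j, j \in B (2*m+1) <-> exists d, j = 2*d+1 /\ c <= d <= m.
  move=> j; rewrite HB; split.
    case/mapP=> k; rewrite mem_iota => hk ->; exists (c+k); lia.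
  case=> d [-> hd]; apply/mapP; exists (d-c); first by rewrite mem_iota; lia.
  lia.
have ch : forall x, S (2*m+1) x <-> forall j, j \in B (2*m+1) -> T j x.
  move=> x; rewrite (@main m c x hc); split.
    by move=> H j /memB [d [-> hd]]; apply: H.
  by move=> H d hd; apply: H; apply/memB; exists d.
split => //.
rewrite Hsz; split.
- lia.
- move=> k; rewrite Hnth ?ltn_ord //; exact: T_irr.
- move=> x; rewrite (@main m c x hc); split.
    by move=> H k; rewrite Hnth ?ltn_ord //; apply: H; have := ltn_ord k; lia.
  move=> H d hd.
  have hk : d - c < m-c+1 by lia.
  have := H (Ordinal hk); rewrite Hnth //= ; have -> : c + (d-c) = d by lia.
  done.
- move=> J _ JT H.
  have [k0 k0J] : exists k0, k0 \notin J.
    apply/existsP; apply: contraR JT => /existsPn hn.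
    by apply/eqP/setP => k; rewrite inE; have := hn k; rewrite negbK.
  have hk0 := ltn_ord k0.
  have : S (2*m+1) (2*(c+k0)+1).
    apply/H => k kJ.
    have nk : (k:nat) != (k0:nat).
      apply: contraNneq k0J => e; suff -> : k0 = k by [].
      by apply: val_inj.
    rewrite Hnth ?ltn_ord //; apply/Tod.
    have := ltn_ord k; move/eqP: nk; lia.
  rewrite (@main m c _ hc) => /(_ (c+k0) ltac:(lia)) /Tod; lia.
Qed.
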